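(* Let $\mathcal X=\{1,\dots,N\}$ with $N\ge2$, let $T\ge2$, let $\mathrm{PWS}$ be a piecewise stationary source for sequences of length $T$ with complexity $C_{\mathrm{PWS}}$, and let $u$ be the uniform distribution on $\mathcal X$. Let $\mathrm{PS}$ be the Probability Smoothing model with share factors $\varepsilon_t=\frac1{t+1}$, smoothing rates $\alpha_t=\exp\!\Big(-\sqrt{\frac{\log(N/\varepsilon_t)}{2Nt}}\Big)$, and an initial distribution $p$ with $p(x)\ge\frac{\varepsilon_1}{N-1}$ for all $x\in\mathcal X$. Then for every sequence $x_{1:T}\in\mathcal X^T$, \[ \ell_{\mathrm{PS}}(x_{1:T})\le\ell_{\mathrm{PWS}}(x_{1:T})+\sqrt{2N(T+1)\log(N(T+1))}\cdot(1+C_{\mathrm{PWS}})+\sqrt{\frac{128NT}{\log T}}+O(N\log T). \]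
   Context: All logarithms are natural, with $\log\frac10=+\infty$. A model maps each finite sequence $x_{1:t}$ over $\mathcal X$ (including the empty one) to a distribution on $\mathcal X$; $M(x;x_{1:t})$ denotes the probability of $x$. Code length: $\ell_M(x_{1:T})=\sum_{t=1}^T\log\frac1{M(x_t;x_{<t})}$ with $x_{<t}=x_{1:t-1}$. Probability Smoothing with parameters $(\alpha_{1:\infty},\varepsilon_{1:\infty},p)$: $\mathrm{PS}(\cdot;\text{empty})=p$, and for $t\ge1$, $\mathrm{PS}(x;x_{1:t})=\alpha_t\,\mathrm{PS}(x;x_{<t})+(1-\alpha_t)(1-\varepsilon_t)$ if $x=x_t$ and $=\alpha_t\,\mathrm{PS}(x;x_{<t})+(1-\alpha_t)\frac{\varepsilon_t}{N-1}$ if $x\ne x_t$. A piecewise stationary source (PWS) for length $T$ is given by a partition $\mathcal P$ of $\{1,\dots,T\}$ into consecutive integer intervals $[t_1,t_2),\dots,[t_n,t_{n+1})$ ($1=t_1<\dots<t_{n+1}=T+1$, $[i,j)=\{i,\dots,j-1\}$) and distributions $\{p_S\}_{S\in\mathcal P}$; $\ell_{\mathrm{PWS}}(x_{1:T})=\sum_{S\in\mathcal P}\sum_{t\in S}\log\frac1{p_S(x_t)}$. The transition set $\mathcal T$ consists of the triples $(t,A,B)$ with $A=[i,t)$, $B=[t,j)$ both in $\mathcal P$; the complexity is $C_{\mathrm{PWS}}=1+\sum_{(t,A,B)\in\mathcal T}\lVert p_B-p_A\rVert$ with $\lVert p-q\rVert=\sum_x|p(x)-q(x)|$. The term $O(N\log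 T)$ denotes a quantity (depending on $N$, $T$ and $p$) that, for fixed $N$, grows at most proportionally to $N\log T$ as $T\to\infty$. *)

(* Defs.v *)
From HB Require Import structures.
From mathcomp Require Import all_boot all_order all_algebra.
From mathcomp Require Import all_classical all_reals all_analysis.
Set Implicit Arguments. Unset Strict Implicit. Unset Printing Implicit Defensive.
Import Order.TTheory GRing.Theory Num.Theory.
Local Open Scope ring_scope.

(* Alphabet X = {1..N} is represented by 'I_N. A model maps a history
   (seq 'I_N, oldest symbol first) to a function 'I_N -> R. *)

Section Defs.
Variable R : realType.
Variable N : nat.

Definition model := seq 'I_N -> 'I_N -> R.

(* code length  l_M(x_{1:T}) = sum_{t=1}^T log 1/M(x_t; x_{<t}) ;
   t is 0-based here: x_{t+1} = tnth xs t and x_{<t+1} = take t xs *)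
Definition code_length (T : nat) (M : model) (xs : T.-tuple 'I_N) : R :=
  \sum_(t < T) ln (1 / M (take t xs) (tnth xs t)).

(* Probability smoothing, parameters alpha, eps : nat -> R (indexed from 1),
   initial distribution p.  ps_rev works on the REVERSED history. *)
Fixpoint ps_rev (alpha eps : nat -> R) (p : 'I_N -> R) (rh : seq 'I_N)
  (x : 'I_N) : R :=
  match rh with
  | [::] => p x
  | a :: rh' =>
      let t := (size rh').+1 in
      alpha t * ps_rev alpha eps p rh' x +
      (1 - alpha t) * (if x == a then 1 - eps t else eps t / (N.-1)%:R)
  end.

Definition PS (alpha eps : nat -> R) (p : 'I_N -> R) : model :=
  fun h x => ps_rev alpha eps p (rev h) x.

Definition eps_thm (t : nat) : R := 1 / (t.+1)%:R.
Definition alpha_thm (t : nat) : R :=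
  expR (- Num.sqrt (ln (N%:R / eps_thm t) / (2 * N%:R * t%:R))).

Definition is_distr (q : 'I_N -> R) : Prop :=
  (forall x, 0 <= q x) /\ \sum_x q x = 1.

(* Piecewise stationary source for length T:
   n segments, breakpoints b = [:: t_1; ...; t_{n+1}] with
   1 = t_1 < ... < t_{n+1} = T+1, segment i (i < n) is [t_{i+1}, t_{i+2})
   (0-based list index: [nth 0 b i, nth 0 b i.+1)), distribution q i. *)
Definition is_PWS (T n : nat) (b : seq nat) (q : nat -> 'I_N -> R) : Prop :=
  [/\ size b = n.+1, sorted ltn b, nth 0 b 0 = 1%N, nth 0 b n = T.+1
    & forall i, (i < n)%N -> is_distr (q i)].

(* l_PWS; position t (0-based) is time t+1 *)
Definition PWS_length (T n : nat) (b : seq nat) (q : nat -> 'I_N -> R)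
  (xs : T.-tuple 'I_N) : R :=
  \sum_(i < n) \sum_(t < T | (nth 0 b i <= t.+1 < nth 0 b i.+1)%N)
      ln (1 / q i (tnth xs t)).

Definition l1dist (p q : 'I_N -> R) : R := \sum_x `|p x - q x|.

Definition PWS_complexity (n : nat) (q : nat -> 'I_N -> R) : R :=
  1 + \sum_(i < n.-1) l1dist (q i.+1) (q i).

End Defs.

(* Main.v *)
Require Import Defs.
From HB Require Import structures.
From mathcomp Require Import all_boot all_order all_algebra.
From mathcomp Require Import all_classical all_reals all_analysis.
From mathcomp Require Import ring lra zify.
Import Order.TTheory GRing.Theory Num.Theory.
Local Open Scope ring_scope.
Ltac nz := repeat (apply/andP; split); rewrite gt_eqF //; lra.

Lemma lnMp {R : realType} (x y : R) : 0 < x -> 0 < y -> ln (x * y) = ln x + ln y.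
Proof. by move=> hx hy; rewrite lnM // posrE. Qed.
Lemma lnVp {R : realType} (x : R) : 0 < x -> ln (x^-1) = - ln x.
Proof. by move=> hx; rewrite lnV // posrE. Qed.
Lemma ln_le_sub1 {R : realType} {x : R} : 0 < x -> ln x <= x - 1.
Proof.
move=> hx; have h : -1 < x - 1 by lra.
by have := le_ln1Dx h; rewrite (_ : 1 + (x - 1) = x) //; ring.
Qed.
Lemma ln_ge_1V {R : realType} {x : R} : 0 < x -> 1 - x^-1 <= ln x.
Proof.
move=> hx; have hx' : 0 < x^-1 by rewrite invr_gt0.
have := ln_le_sub1 hx'; rewrite lnVp //; lra. Qed.

Lemma scalar_step {R : realType} (a b c g al be z : R) : 0 < a -> 0 < b -> 0 < c -> 0 < g ->
  al = expR (-g) -> be = 1 - al -> z = be * c / (al * a) ->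
  ln b - ln a <= (ln al + b * ln (1 + z)) / be - ln c + ln (1 + z).
Proof.
move=> ha hb hc hg eal ebe0 ez.
have al0 : 0 < al by rewrite eal expR_gt0.
have al1 : al < 1 by rewrite eal expR_lt1 oppr_lt0.
have be0 : 0 < be by rewrite ebe0 subr_gt0.
have z0 : 0 < z by rewrite ez divr_gt0 // ?mulr_gt0.
have lz0 : 0 < ln (1 + z) by apply: ln_gt0; lra.
set lz := ln (1 + z) in lz0 *.
have lzge : z <= (1 + z) * lz.
  have := @ln_ge_1V _ (1 + z); rewrite -/lz => h.
  have {}h := h ltac:(lra).
  have e : 1 - (1 + z)^-1 = z / (1 + z) by field; lra.
  rewrite e ler_pdivrMr in h; last lra.
  by rewrite mulrC.
have lal : ln al = - g by rewrite eal expRK.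
have gbe : g / be <= 1 + g.
  rewrite ler_pdivrMr //.
  have := expR_ge1Dx g => h.
  have e1 : expR g * al = 1 by rewrite eal -expRD subrr expR0.
  rewrite ebe0; nra.
set S := lz / be.
have S0 : 0 < S by rewrite divr_gt0.
have h1 : ln (b * S) <= b * S - 1 by apply: ln_le_sub1; rewrite mulr_gt0.
rewrite lnMp // /S lnMp ?invr_gt0 // lnVp // in h1.
have ebe : be = z * al * a / c by rewrite ez; field; rewrite (gt_eqF hc) (gt_eqF ha) (gt_eqF al0).
have lbe : ln be = ln z - g + ln a - ln c.
  rewrite ebe lnMp ?mulr_gt0 ?invr_gt0 // lnMp ?mulr_gt0 // lnMp // lnVp // lal; ring.
have h2 : ln z <= ln (1 + z) + ln lz.
  rewrite -lnMp //; last lra.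
  rewrite ler_ln ?posrE // ?mulr_gt0 //; lra.
have e3 : (- g + b * lz) / be = - (g / be) + b * S by rewrite /S; field; lra.
have h1' : ln b + (ln lz - ln be) <= b * S - 1 := h1.
have h2' : ln z <= lz + ln lz := h2.
rewrite lal e3; lra.
Qed.

Lemma inv_le {R : realType} (a b : R) : 0 < a -> a <= b -> b^-1 <= a^-1.
Proof. move=> ha hab; rewrite lef_pV2 ?posrE //; lra. Qed.

Section Params.
Variable R : realType.
Variable N : nat.
Hypothesis N2 : (2 <= N)%N.

Definition ga (t : nat) : R := Num.sqrt (ln (N%:R * t.+1%:R) / (2 * N%:R * t%:R)).
Definition be (t : nat) : R := 1 - alpha_thm R N t.

Lemma ep_eq t : eps_thm R t = (t.+1%:R)^-1.
Proof. by rewrite /eps_thm div1r. Qed.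

Lemma Ndiv t : N%:R / eps_thm R t = N%:R * t.+1%:R :> R.
Proof. by rewrite ep_eq invrK. Qed.

Lemma al_eq t : alpha_thm R N t = expR (- ga t).
Proof. by rewrite /alpha_thm Ndiv. Qed.

Lemma N_gt0 : (0 : R) < N%:R.
Proof. rewrite ltr0n; lia. Qed.
Lemma N_ge2 : (2 : R) <= N%:R.
Proof. by rewrite ler_nat. Qed.

Lemma lnN_gt0 t : 0 < ln (N%:R * t.+1%:R : R).
Proof.
apply: ln_gt0; rewrite -natrM (_ : 1 = 1%:R) // ltr_nat; nia.
Qed.

Lemma ga_gt0 t : (0 < t)%N -> 0 < ga t.
Proof.
move=> t0; rewrite /ga sqrtr_gt0 divr_gt0 ?lnN_gt0 //.
rewrite !mulr_gt0 ?N_gt0 // ltr0n //.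
Qed.

Lemma al_gt0 t : 0 < alpha_thm R N t.
Proof. by rewrite al_eq expR_gt0. Qed.

Lemma al_lt1 t : (0 < t)%N -> alpha_thm R N t < 1.
Proof. by move=> t0; rewrite al_eq expR_lt1 oppr_lt0 ga_gt0. Qed.

Lemma be_gt0 t : (0 < t)%N -> 0 < be t.
Proof. by move=> t0; rewrite /be subr_gt0 al_lt1. Qed.

Lemma ga_decr t : (0 < t)%N -> ga t.+1 <= ga t.
Proof.
move=> t0; rewrite /ga ler_sqrt; last first.
  apply: divr_ge0; [exact: ltW (lnN_gt0 _) | by rewrite !mulr_ge0 ?ler0n].
have e1 : t.+1%:R = t%:R + 1 :> R by rewrite -addn1 natrD.
have e2 : t.+2%:R = t%:R + 2 :> R by rewrite -addn2 natrD.
have A0 := lnN_gt0 t.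
rewrite e1 e2 in A0 *.
set A := ln (N%:R * (t%:R + 1) : R) in A0 *.
set A' := ln (N%:R * (t%:R + 2) : R).
have tR : (1 : R) <= t%:R by rewrite (_ : 1 = 1%:R) // ler_nat.
have Np := N_gt0.
have NR := N_ge2.
have h1 : 0 < N%:R * (t%:R + 2) :> R by rewrite mulr_gt0 //; lra.
have h2 : 0 < N%:R * (t%:R + 1) :> R by rewrite mulr_gt0 //; lra.
have hA' : A' - A <= (t%:R + 1)^-1.
  have := ln_le_sub1 (divr_gt0 h1 h2).
  rewrite /A /A' ln_div ?posrE //.
  have -> : N%:R * (t%:R + 2) / (N%:R * (t%:R + 1)) - 1 = (t%:R + 1)^-1 :> R.
    by field; nz.
  by [].
have hA : 1 - (N%:R * (t%:R + 1))^-1 <= A by apply: ln_ge_1V.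
have hNt : (N%:R * (t%:R + 1))^-1 <= (t%:R + 1)^-1 :> R.
  apply: inv_le; first lra.
  nra.
have key : A' * t%:R <= A * (t%:R + 1).
  have e : 1 - (t%:R + 1)^-1 = t%:R / (t%:R + 1) :> R by field; nz.
  have h4 : t%:R / (t%:R + 1) <= A :> R by lra.
  have h3 : (A' - A) * t%:R <= (t%:R + 1)^-1 * t%:R by rewrite ler_wpM2r //; lra.
  rewrite mulrC -/(t%:R / (t%:R + 1)) in h3.
  nra.
have p1 : 0 < 2 * N%:R * (t%:R + 1) :> R by rewrite !mulr_gt0 //; lra.
have p2 : 0 < 2 * N%:R * t%:R :> R by rewrite !mulr_gt0 //; lra.
rewrite ler_pdivrMr // mulrAC ler_pdivlMr //.
have e3 : A' * (2 * N%:R * t%:R) = 2 * N%:R * (A' * t%:R) by ring.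
have e4 : A * (2 * N%:R * (t%:R + 1)) = 2 * N%:R * (A * (t%:R + 1)) by ring.
rewrite e3 e4 ler_wpM2l //; lra.
Qed.

Lemma be_decr t : (0 < t)%N -> be t.+1 <= be t.
Proof.
move=> t0; rewrite /be !al_eq lerD2l lerN2 ler_expR lerN2; exact: ga_decr.
Qed.

Lemma be_mono s t : (0 < s)%N -> (s <= t)%N -> be t <= be s.
Proof.
move=> s0; elim: t => [|t IH]; first by rewrite leqn0 => /eqP ->.
rewrite leq_eqVlt => /orP [/eqP -> //|]; rewrite ltnS => st.
apply: le_trans (IH st); apply: be_decr; exact: leq_trans st.
Qed.

Lemma invbe_le t : (0 < t)%N -> (be t)^-1 <= (ga t)^-1 + 1.
Proof.
move=> t0; have g0 := @ga_gt0 t t0; have b0 := @be_gt0 t t0.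
have h := expR_ge1Dx (ga t).
have e1 : expR (ga t) * expR (- ga t) = 1 by rewrite -expRD subrr expR0.
have hb : ga t <= be t * (1 + ga t).
  rewrite /be al_eq; have := expR_gt0 (- ga t); nra.
have e2 : (ga t)^-1 + 1 = (1 + ga t) / ga t by field; nz.
rewrite e2 ler_pdivlMr // mulrC ler_pdivrMr // mulrC //.
Qed.

End Params.

Section Dyn.
Variable R : realType.
Variable N : nat.
Hypothesis N2 : (2 <= N)%N.
Variable x0 : 'I_N.
Variable p : 'I_N -> R.
Hypothesis Hp : is_distr p.
Hypothesis Hplb : forall x, eps_thm R 1 / (N.-1)%:R <= p x.
Variable T : nat.
Hypothesis T1 : (1 <= T)%N.
Variable xs : T.-tuple 'I_N.

Definition W k y := PS (alpha_thm R N) (eps_thm R) p (take k xs) y.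
Definition xk k := nth x0 xs k.
Definition vv k y : R := if y == xk k then 1 - eps_thm R k.+1 else eps_thm R k.+1 / (N.-1)%:R.

Lemma W0 y : W 0 y = p y.
Proof. by rewrite /W /PS take0. Qed.

Lemma Wrec k y : (k < T)%N ->
  W k.+1 y = alpha_thm R N k.+1 * W k y + (1 - alpha_thm R N k.+1) * vv k y.
Proof.
move=> kT; rewrite /W /PS (take_nth x0) ?size_tuple // rev_rcons /=.
by rewrite size_rev size_takel // size_tuple ltnW.
Qed.

Definition lbk k : R := (((maxn k 1).+1 * N.-1)%:R)^-1.

Lemma N1R : (1 : R) <= (N.-1)%:R.
Proof. rewrite (_ : 1 = 1%:R) // ler_nat; lia. Qed.

Lemma p_le1 y : p y <= 1.
Proof.
case: Hp => h0 h1; rewrite -h1 (bigD1 y) //= lerDl.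
by apply: sumr_ge0 => i _; apply: h0.
Qed.

Lemma vv_bounds k y : (((k.+2) * N.-1)%:R)^-1 <= vv k y <= 1.
Proof.
have n1 := N1R.
have e : eps_thm R k.+1 / (N.-1)%:R = (((k.+2) * N.-1)%:R)^-1.
  by rewrite ep_eq natrM invfM.
have k2 : (2 : R) <= k.+2%:R by rewrite ler_nat.
have ep0 : 0 < eps_thm R k.+1 by rewrite ep_eq invr_gt0 ltr0n.
have eph : eps_thm R k.+1 <= 2^-1.
  by rewrite ep_eq; apply: inv_le => //; lra.
have epd : eps_thm R k.+1 / (N.-1)%:R <= eps_thm R k.+1.
  by rewrite ler_pdivrMr; nra.
rewrite /vv; case: ifP => _; rewrite -e; apply/andP; split; try lra.
Qed.

Lemma W_bounds k : (k <= T)%N -> forall y, lbk k <= W k y <= 1.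
Proof.
elim: k => [|k IH] kT y.
  rewrite W0 p_le1 andbT; apply: le_trans (Hplb y) => /=.
  by rewrite /lbk /= ep_eq natrM invfM.
have {}IH := IH (ltnW kT).
have a0 := @al_gt0 R N k.+1.
have a1 := @al_lt1 R N N2 k.+1 isT.
rewrite Wrec //; case/andP: (IH y) => l1 u1; case/andP: (vv_bounds k y) => l2 u2.
have ll : lbk k.+1 <= lbk k.
  rewrite /lbk; apply: inv_le; first by rewrite ltr0n; nia.
  by rewrite ler_nat leq_mul2r; apply/orP; right; lia.
have e : lbk k.+1 = (((k.+2) * N.-1)%:R)^-1 by rewrite /lbk (maxn_idPl _).
rewrite -e in l2.
apply/andP; split; nra.
Qed.

Lemma W_low k y : (k <= T)%N -> ((N * T.+1)%:R)^-1 <= W k y.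
Proof.
move=> kT; case/andP: (@W_bounds k kT y) => + _; apply: le_trans.
rewrite /lbk; apply: inv_le; first by rewrite ltr0n; nia.
rewrite ler_nat; nia.
Qed.

Lemma W_gt0 k y : (k <= T)%N -> 0 < W k y.
Proof.
move=> kT; apply: lt_le_trans (@W_low k y kT); rewrite invr_gt0 ltr0n; nia.
Qed.

Lemma W_le1 k y : (k <= T)%N -> W k y <= 1.
Proof. by move=> kT; case/andP: (@W_bounds k kT y). Qed.

Definition Phi k (u : 'I_N -> R) := \sum_y u y * (- ln (W k y)).
Definition Psi k := \sum_y ln (W k y).

Lemma sum_if (F : 'I_N -> R) x : \sum_y (if y == x then F y else 0) = F x.
Proof. by rewrite -big_mkcond big_pred1_eq. Qed.

Lemma sum_cst (c : R) : \sum_(y : 'I_N) c = N%:R * c.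
Proof. by rewrite sumr_const card_ord mulr_natl. Qed.

Lemma step k u : (k < T)%N -> is_distr u -> 0 < u (xk k) ->
  ln (u (xk k)) - ln (W k (xk k)) <=
    (Phi k u - Phi k.+1 u) / be R N k.+1 + (ln (k.+2%:R) - ln (k.+1%:R))
    + (Psi k.+1 - Psi k) + N%:R * ga R N k.+1.
Proof.
move=> kT [u0 u1] ux0.
set x := xk k; set a := W k x; set al := alpha_thm R N k.+1.
set g := ga R N k.+1; set b := be R N k.+1; set c := 1 - eps_thm R k.+1.
have a0 : 0 < a by apply: W_gt0; exact: ltnW.
have al0 : 0 < al by apply: al_gt0.
have g0 : 0 < g by apply: ga_gt0.
have b0 : 0 < b by apply: be_gt0.
have eal : al = expR (- g) by rewrite /al al_eq.
have eb : b = 1 - al by [].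
have k1 : (1 : R) <= k.+1%:R by rewrite (_ : 1 = 1%:R) // ler_nat.
have ec : c = k.+1%:R / k.+2%:R.
  rewrite /c ep_eq -[k.+2]addn1 natrD; field; nz.
have c0 : 0 < c by rewrite ec divr_gt0 // ltr0n.
set z := b * c / (al * a).
have z0 : 0 < z by rewrite divr_gt0 ?mulr_gt0.
have hS := @scalar_step _ a (u x) c g al b z a0 ux0 c0 g0 eal eb (erefl z).
have Wx : W k.+1 x = al * a * (1 + z).
  rewrite Wrec // /vv eqxx -/al -/c -/a /z -eb; field; nz.
have dx : ln (W k.+1 x) - ln (W k x) = ln al + ln (1 + z).
  rewrite Wx -/a !lnMp ?mulr_gt0 //; last lra; ring.
have dy y : ln al + (if y == x then ln (1 + z) else 0) <= ln (W k.+1 y) - ln (W k y).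
  case: eqP => [->|ne] /=; first by rewrite dx lexx.
  rewrite addr0 lerBrDr -lnMp; last by apply: W_gt0; exact: ltnW.
    rewrite ler_ln ?posrE ?mulr_gt0 ?W_gt0 //; try exact: ltnW.
    rewrite Wrec // lerDl mulr_ge0 //; first by rewrite -/al; lra.
    by case/andP: (vv_bounds k y) => h _; apply: le_trans h; rewrite invr_ge0 ler0n.
  done.
have hPhi : ln al + u x * ln (1 + z) <= Phi k u - Phi k.+1 u.
  have -> : Phi k u - Phi k.+1 u = \sum_y u y * (ln (W k.+1 y) - ln (W k y)).
    by rewrite /Phi -sumrB; apply: eq_bigr => y _; ring.
  have -> : ln al + u x * ln (1 + z) =
      \sum_y u y * (ln al + (if y == x then ln (1 + z) else 0)).
    have e : ln al = \sum_y u y * ln al by rewrite -mulr_suml u1 mul1r.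
    rewrite -(sum_if (fun y => u y * ln (1 + z)) x) {1}e -big_split /=.
    apply: eq_bigr => y _; case: eqP => _ /=; ring.
  by apply: ler_sum => y _; apply: ler_wpM2l; [exact: u0 | exact: dy].
have hPsi : N%:R * ln al + ln (1 + z) <= Psi k.+1 - Psi k.
  have -> : Psi k.+1 - Psi k = \sum_y (ln (W k.+1 y) - ln (W k y)) by rewrite /Psi sumrB.
  have -> : N%:R * ln al + ln (1 + z) = \sum_y (ln al + (if y == x then ln (1 + z) else 0)).
    by rewrite big_split /= sum_cst (sum_if (fun _ => ln (1 + z))).
  by apply: ler_sum => y _; apply: dy.
have lc : - ln c = ln k.+2%:R - ln k.+1%:R.
  by rewrite ec ln_div ?posrE ?ltr0n //; ring.
have lal : ln al = - g by rewrite eal expRK.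
have hdiv : (ln al + u x * ln (1 + z)) / b <= (Phi k u - Phi k.+1 u) / b.
  by rewrite ler_pdivrMr // divfK ?gt_eqF.
rewrite lal in hPsi; lra.
Qed.

Definition LL : R := ln (N%:R * T.+1%:R).
Definition KK : R := (be R N T.+1)^-1.
Definition Pot k u := Phi k u / be R N k.+1 + LL * (KK - (be R N k.+1)^-1) - Psi k - ln (k.+1%:R : R).

Lemma nlW_bounds k y : (k <= T)%N -> 0 <= - ln (W k y) <= LL.
Proof.
move=> kT; have w0 := @W_gt0 k y kT; have w1 := @W_le1 k y kT.
have wl := @W_low k y kT.
apply/andP; split; first by rewrite oppr_ge0 ln_le0.
have p0 : 0 < (N * T.+1)%:R :> R by rewrite ltr0n; nia.
rewrite /LL -natrM lerNl -lnVp //.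
by rewrite ler_ln ?posrE ?invr_gt0.
Qed.

Lemma LL_ge0 : 0 <= LL.
Proof. rewrite /LL; apply: ltW; exact: lnN_gt0. Qed.

Lemma Phi_bounds k u : (k <= T)%N -> is_distr u -> 0 <= Phi k u <= LL.
Proof.
move=> kT [u0 u1]; apply/andP; split.
  by apply: sumr_ge0 => y _; apply: mulr_ge0 => //; case/andP: (@nlW_bounds k y kT).
rewrite -[LL]mul1r -u1 mulr_suml; apply: ler_sum => y _; apply: ler_wpM2l => //.
by case/andP: (@nlW_bounds k y kT).
Qed.

Lemma Psi_le0 k : (k <= T)%N -> Psi k <= 0.
Proof.
move=> kT; rewrite /Psi -oppr_ge0 -sumrN; apply: sumr_ge0 => y _.
by case/andP: (@nlW_bounds k y kT).
Qed.

Lemma Pot_step k u : (k < T)%N -> is_distr u -> 0 < u (xk k) ->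
  ln (u (xk k)) - ln (W k (xk k)) <= Pot k u - Pot k.+1 u + N%:R * ga R N k.+1.
Proof.
move=> kT du ux; have h := @step k u kT du ux.
have [_ hP] := andP (@Phi_bounds k.+1 u kT du).
have b1 : 0 < be R N k.+1 by apply: be_gt0.
have b2 : 0 < be R N k.+2 by apply: be_gt0.
have bd : (be R N k.+1)^-1 <= (be R N k.+2)^-1 by apply: inv_le => //; apply: be_decr.
have e1 : Phi k.+1 u / be R N k.+1 = Phi k.+1 u * (be R N k.+1)^-1 by [].
have e2 : Phi k.+1 u / be R N k.+2 = Phi k.+1 u * (be R N k.+2)^-1 by [].
have key : (LL - Phi k.+1 u) * ((be R N k.+2)^-1 - (be R N k.+1)^-1) >= 0.
  by apply: mulr_ge0; lra.
rewrite mulrBl in h.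
have key' : 0 <= LL * (be R N k.+2)^-1 - LL * (be R N k.+1)^-1 - Phi k.+1 u * (be R N k.+2)^-1 + Phi k.+1 u * (be R N k.+1)^-1.
  by move: key; rewrite mulrBl !mulrBr; lra.
rewrite /Pot !mulrBr; lra.
Qed.

Lemma Pot0_le u : is_distr u -> Pot 0 u <= LL * KK + N%:R * ln (2 * N%:R).
Proof.
move=> du; have [_ hP] := andP (@Phi_bounds 0 u isT du).
have b1 : 0 < be R N 1 by apply: be_gt0.
have hP' : Phi 0 u / be R N 1 <= LL / be R N 1 by rewrite ler_pM2r ?invr_gt0.
have hPsi : - Psi 0 <= N%:R * ln (2 * N%:R).
  rewrite /Psi -sumrN -sum_cst; apply: ler_sum => y _.
  rewrite W0 -lnVp; last by case: Hp => h _; apply: lt_le_trans (Hplb y); rewrite ep_eq divr_gt0 // ?invr_gt0 ?ltr0n //; lia.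
  have py : 0 < p y by apply: lt_le_trans (Hplb y); rewrite ep_eq divr_gt0 // ?invr_gt0 ?ltr0n //; lia.
  have n1 := N1R.
  have NR := @N_ge2 R N N2.
  rewrite ler_ln ?posrE ?invr_gt0 ?mulr_gt0 //; last lra.
  rewrite -[_ * _]invrK; apply: inv_le; first by rewrite invr_gt0; lra.
  apply: le_trans (Hplb y); rewrite ep_eq /=.
  have e : (1 + 1 : R) = 2 by [].
  rewrite -[1.+1%:R]/(1 + 1 : R) e.
  rewrite -invfM; apply: inv_le; first lra.
  by rewrite ler_pM2l // ler_nat leq_pred.
rewrite /Pot ln1; lra.
Qed.

Lemma PotT_ge u : is_distr u -> - ln (T.+1%:R : R) <= Pot T u.
Proof.
move=> du; have [hP _] := andP (@Phi_bounds T u (leqnn T) du).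
have b1 : 0 < be R N T.+1 by apply: be_gt0.
have := @Psi_le0 T (leqnn T).
rewrite /Pot /KK subrr mulr0 addr0.
have : 0 <= Phi T u / be R N T.+1 by rewrite divr_ge0 // ltW.
lra.
Qed.

Lemma Pot_switch m u u' : (m <= T)%N -> is_distr u -> is_distr u' ->
  Pot m u' - Pot m u <= LL / 2 * KK * l1dist u' u.
Proof.
move=> mT [u0 u1] [u0' u1'].
have b1 : 0 < be R N m.+1 by apply: be_gt0.
have bT : 0 < be R N T.+1 by apply: be_gt0.
have -> : Pot m u' - Pot m u = (Phi m u' - Phi m u) / be R N m.+1 by rewrite /Pot; field; nz.
have hd : Phi m u' - Phi m u <= LL / 2 * l1dist u' u.
  have -> : Phi m u' - Phi m u = \sum_y (u' y - u y) * (- ln (W m y) - LL / 2).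
    have s0 : \sum_y (u' y - u y) = 0 by rewrite sumrB u1 u1' subrr.
    have -> : \sum_y (u' y - u y) * (- ln (W m y) - LL / 2) =
        \sum_y (u' y - u y) * (- ln (W m y)) - (\sum_y (u' y - u y)) * (LL / 2).
      by rewrite mulr_suml -sumrB; apply: eq_bigr => y _; ring.
    rewrite s0 mul0r subr0 /Phi -sumrB; apply: eq_bigr => y _; ring.
  rewrite /l1dist mulr_sumr; apply: ler_sum => y _.
  apply: le_trans (ler_norm _) _; rewrite normrM mulrC; apply: ler_wpM2r => //.
  rewrite ler_norml; case/andP: (@nlW_bounds m y mT) => h1 h2; apply/andP; split; lra.
have l0 : 0 <= l1dist u' u by apply: sumr_ge0 => y _.
have hK : (be R N m.+1)^-1 <= KK by apply: inv_le => //; apply: be_mono.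
have L0 := LL_ge0.
have hLl : 0 <= LL / 2 * l1dist u' u by apply: mulr_ge0 => //; lra.
apply: le_trans (_ : LL / 2 * l1dist u' u * (be R N m.+1)^-1 <= _).
  by apply: ler_wpM2r => //; rewrite invr_ge0 ltW.
rewrite -mulrA (mulrC (l1dist u' u)) mulrA.
apply: ler_wpM2r => //; apply: ler_wpM2l => //; lra.
Qed.

End Dyn.

Lemma range_tele {R : realType} (F : nat -> R) T a c : (a <= c <= T)%N ->
  \sum_(k < T | (a <= k < c)%N) (F k - F k.+1) = F a - F c.
Proof.
case/andP=> ac cT.
rewrite -(big_ord_widen_cond T (fun k => (a <= k)%N) (fun k => F k - F k.+1) cT).
have e0 : \sum_(a <= k < c) (F k - F k.+1) = \sum_(k < c | (a <= k)%N) (F k - F k.+1).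
  by rewrite big_geq_mkord.
rewrite -e0.
have h := telescope_sumr (fun k => - F k) ac.
have e : \sum_(a <= k < c) (F k - F k.+1) = \sum_(a <= k < c) (- F k.+1 - - F k).
  by apply: eq_bigr => k _; ring.
rewrite e h; ring.
Qed.

Lemma disc (P : nat -> bool) n : P 0%N -> ~~ P n -> exists i, (i < n)%N && P i && ~~ P i.+1.
Proof.
move=> P0; elim: n => [|n IH]; first by rewrite P0.
move=> Pn; case: (boolP (P n)) => Pn'.
  by exists n; rewrite ltnSn Pn' Pn.
by case: (IH Pn') => i /andP [/andP [i1 i2] i3]; exists i; rewrite i2 i3 ltnS ltnW.
Qed.

Lemma bmono (b : seq nat) n i j : size b = n.+1 -> sorted ltn b -> (i <= j <= n)%N ->
  (nth 0 b i <= nth 0 b j)%N.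
Proof.
move=> sb so /andP [ij jn]; case: (ltngtP i j) ij => // [lij _|-> _]; last by [].
apply: ltnW; apply: (sorted_ltn_nth ltn_trans 0 so) => //; rewrite inE sb ltnS //.
exact: leq_trans (ltnW lij) jn.
Qed.

Lemma partition {R : realType} (f : nat -> R) T n (b : seq nat) :
  size b = n.+1 -> sorted ltn b -> nth 0 b 0 = 1%N -> nth 0 b n = T.+1 ->
  \sum_(t < T) f t = \sum_(i < n) \sum_(t < T | (nth 0 b i <= t.+1 < nth 0 b i.+1)%N) f t.
Proof.
move=> sb so b0 bn.
under [RHS]eq_bigr do rewrite big_mkcond.
rewrite exchange_big /=; apply: eq_bigr => t _.
have [i /andP [/andP [ilt c1] c2]] := @disc (fun i => nth 0 b i <= t.+1)%N n
  ltac:(by rewrite /= b0) ltac:(by rewrite /= bn -ltnNge ltnS ltn_ord).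
rewrite (bigD1 (Ordinal ilt)) //= c1 /= ltnNge c2 /= big1 ?addr0 // => j /eqP nji.
case: ifP => // /andP [d1 d2]; exfalso; apply: nji; apply: val_inj => /=.
case: (ltngtP j i) => // [ji|ij].
  have h : (nth 0 b j.+1 <= nth 0 b i)%N by apply: (@bmono b n _ _ sb so); rewrite ji /= ltnW.
  by have := leq_trans h c1; rewrite leqNgt d2.
have h : (nth 0 b i.+1 <= nth 0 b j)%N by apply: (@bmono b n _ _ sb so); rewrite ij /= ltnW.
by have := leq_trans h d1; rewrite (negbTE c2).
Qed.

Lemma seg_tele {R : realType} (G : nat -> nat -> R) n :
  \sum_(i < n.+1) (G i i - G i.+1 i) = G 0%N 0%N - G n.+1 n + \sum_(i < n) (G i.+1 i.+1 - G i.+1 i).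
Proof.
elim: n => [|n IH]; first by rewrite big_ord1 big_ord0 addr0.
rewrite big_ord_recr /= IH big_ord_recr /=; ring.
Qed.

Section Sums.
Variable R : realType.
Variable N : nat.
Hypothesis N2 : (2 <= N)%N.

Lemma ga_term T k (D : R) : (k < T)%N -> D = 2 * N%:R * ln (N%:R * T.+1%:R) ->
  N%:R * ga R N k.+1 <= Num.sqrt (D * k.+1%:R) - Num.sqrt (D * k%:R).
Proof.
move=> kT eD.
have NR := @N_ge2 R N N2.
have A0 := @lnN_gt0 R N N2 k.+1.
set A := ln (N%:R * k.+2%:R : R) in A0.
have AL : A <= ln (N%:R * T.+1%:R).
  rewrite ler_ln ?posrE ?mulr_gt0 ?ltr0n //; try lia.
  by rewrite ler_pM2l ?ltr0n ?ler_nat //; lia.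
have D0 : 0 < D by rewrite eD !mulr_gt0 //; try lra; exact: lt_le_trans A0 AL.
have k1 : (1 : R) <= k.+1%:R by rewrite (_ : 1 = 1%:R) // ler_nat.
have ek : k.+1%:R = k%:R + 1 :> R by rewrite -addn1 natrD.
have k0 : (0 : R) <= k%:R by rewrite ler0n.
set X := N%:R * ga R N k.+1.
have g0 : 0 <= ga R N k.+1 by rewrite /ga sqrtr_ge0.
have X0 : 0 <= X by rewrite /X mulr_ge0 //; lra.
have X2 : X ^+ 2 * (4 * k.+1%:R) = 2 * N%:R * A.
  rewrite /X exprMn /ga sqr_sqrtr; last first.
    by apply: divr_ge0; [exact: ltW A0 | rewrite !mulr_ge0 ?ler0n].
  rewrite -/A; field; nz.
have X2D : X ^+ 2 * (4 * k.+1%:R) <= D by rewrite X2 eD ler_pM2l //; lra.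
set s := Num.sqrt (D * k.+1%:R); set r := Num.sqrt (D * k%:R).
have s2 : s ^+ 2 = D * k.+1%:R by rewrite sqr_sqrtr // mulr_ge0 //; lra.
have r2 : r ^+ 2 = D * k%:R by rewrite sqr_sqrtr // mulr_ge0 //; lra.
have s0 : 0 <= s by apply: sqrtr_ge0.
have r0 : 0 <= r by apply: sqrtr_ge0.
rewrite ek in s2 X2D.
have sp : 0 < s by rewrite /s sqrtr_gt0 mulr_gt0 //; lra.
have rs : r <= s by nra.
have h1 : (2 * s * X) ^+ 2 <= D ^+ 2.
  have -> : (2 * s * X) ^+ 2 = 4 * s ^+ 2 * X ^+ 2 by ring.
  rewrite s2; nra.
have h2 : 2 * s * X <= D by nra.
have h3 : D <= 2 * s * (s - r) by nra.
nra.
Qed.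

Lemma sum_ga T : \sum_(k < T) N%:R * ga R N k.+1 <=
  Num.sqrt (2 * N%:R * T.+1%:R * ln (N%:R * T.+1%:R)).
Proof.
set D := 2 * N%:R * ln (N%:R * T.+1%:R) : R.
have NR := @N_ge2 R N N2.
have L0 : (0 : R) <= ln (N%:R * T.+1%:R) by apply: ltW; apply: lnN_gt0.
have D0 : 0 <= D by rewrite /D !mulr_ge0 //; lra.
apply: le_trans (_ : \sum_(k < T) (Num.sqrt (D * k.+1%:R) - Num.sqrt (D * k%:R)) <= _).
  by apply: ler_sum => k _; apply: ga_term.
rewrite -(big_mkord xpredT (fun k => Num.sqrt (D * k.+1%:R) - Num.sqrt (D * k%:R))).
rewrite (telescope_sumr (fun k => Num.sqrt (D * k%:R))) // mulr0 sqrtr0 subr0.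
rewrite ler_sqrt; last by rewrite !mulr_ge0 ?ler0n //; lra.
have -> : 2 * N%:R * T.+1%:R * ln (N%:R * T.+1%:R) = D * T.+1%:R :> R by rewrite /D; ring.
by rewrite ler_wpM2l // ler_nat.
Qed.

Lemma LK_bound T : ln (N%:R * T.+1%:R) * (be R N T.+1)^-1 <=
  Num.sqrt (2 * N%:R * T.+1%:R * ln (N%:R * T.+1%:R)) + ln (N%:R * T.+1%:R) :> R.
Proof.
set L := ln (N%:R * T.+1%:R : R).
set S := Num.sqrt (2 * N%:R * T.+1%:R * L).
have NR := @N_ge2 R N N2.
have L0 : 0 < L by apply: lnN_gt0.
have g0 : 0 < ga R N T.+1 by apply: ga_gt0.
have hb := @invbe_le R N N2 T.+1 isT.
set A' := ln (N%:R * T.+2%:R : R).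
have LA : L <= A'.
  rewrite ler_ln ?posrE ?mulr_gt0 ?ltr0n //; try lia.
  by rewrite ler_pM2l ?ltr0n ?ler_nat //; lia.
have T0 : (0 : R) < T.+1%:R by rewrite ltr0n.
have hgS : L <= ga R N T.+1 * S.
  rewrite /ga /S -sqrtrM; last by apply: divr_ge0; [exact: ltW (@lnN_gt0 R N N2 T.+1) | rewrite !mulr_ge0 ?ler0n //; lra].
  have -> : A' / (2 * N%:R * T.+1%:R) * (2 * N%:R * T.+1%:R * L) = A' * L.
    by field; nz.
  have eL : L = Num.sqrt (L ^+ 2) by rewrite sqrtr_sqr ger0_norm //; lra.
  rewrite {1}eL.
  rewrite ler_sqrt; last by rewrite mulr_ge0 //; lra.
  by rewrite expr2 ler_wpM2r //; lra.
have h1 : L * (be R N T.+1)^-1 <= L * ((ga R N T.+1)^-1 + 1) by rewrite ler_wpM2l //; lra.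
have h2 : L * (ga R N T.+1)^-1 <= S by rewrite ler_pdivrMr // mulrC.
lra.
Qed.

End Sums.

Lemma main_bound (R : realType) (N : nat) (N2 : (2 <= N)%N) (T : nat) (p : 'I_N -> R)
  (T2 : (2 <= T)%N) (Hp : is_distr p) (Hplb : forall x, eps_thm R 1 / (N.-1)%:R <= p x)
  (n : nat) (b : seq nat) (q : nat -> 'I_N -> R) (HP : is_PWS T n b q) (xs : T.-tuple 'I_N)
  (Hpos : forall (i : 'I_n) (t : 'I_T),
            (nth 0 b i <= t.+1 < nth 0 b i.+1)%N -> 0 < q i (tnth xs t)) :
  code_length (PS (alpha_thm R N) (eps_thm R) p) xs <=
    PWS_length n b q xs
    + Num.sqrt (2 * N%:R * (T.+1)%:R * ln (N%:R * (T.+1)%:R)) * (1 + PWS_complexity n q)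
    + Num.sqrt (128 * N%:R * T%:R / ln (T%:R : R))
    + (ln (N%:R * T.+1%:R) + N%:R * ln (2 * N%:R) + ln (T.+1%:R : R)).
Proof.
case: HP => sb so b0 bn Hq.
have T1 : (0 < T)%N by lia.
pose x0 : 'I_N := Ordinal (ltnW N2).
set S := Num.sqrt (2 * N%:R * (T.+1)%:R * ln (N%:R * (T.+1)%:R)).
case: n sb so b0 bn Hq Hpos => [|n] sb so b0 bn Hq Hpos.
  by rewrite b0 in bn; case: bn => e; lia.
pose f k := - ln (W R N p T xs k (xk N x0 T xs k)).
have Ecode : code_length (PS (alpha_thm R N) (eps_thm R) p) xs = \sum_(t < T) f t.
  rewrite /code_length; apply: eq_bigr => t _; rewrite (tnth_nth x0) div1r lnVp //.
  by apply: (@W_gt0 R N N2 x0 p Hp Hplb T T1 xs t); exact: ltnW.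
have Epws : PWS_length n.+1 b q xs =
    \sum_(i < n.+1) \sum_(t < T | (nth 0 b i <= t.+1 < nth 0 b i.+1)%N) (- ln (q i (xk N x0 T xs t))).
  apply: eq_bigr => i _; apply: eq_bigr => t ct; rewrite (tnth_nth x0) div1r lnVp //.
  by have := Hpos i t ct; rewrite (tnth_nth x0).
rewrite Ecode (@partition R f T n.+1 b sb so b0 bn) Epws.
set Pt := Pot R N p T xs.
pose cond (i t : nat) := (nth 0 b i <= t.+1 < nth 0 b i.+1)%N.
have bge1 i : (i <= n.+1)%N -> (1 <= nth 0 b i)%N.
  by move=> iN; rewrite -b0; apply: (@bmono b n.+1 0 i sb so); rewrite leq0n iN.
have ble i : (i <= n.+1)%N -> (nth 0 b i <= T.+1)%N.
  by move=> iN; rewrite -bn; apply: (@bmono b n.+1 i n.+1 sb so); rewrite iN leqnn.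
have seg (i : 'I_n.+1) :
    \sum_(t < T | cond i t) (f t - - ln (q i (xk N x0 T xs t))) <=
    (Pt ((nth 0 b i).-1) (q i) - Pt ((nth 0 b i.+1).-1) (q i))
    + \sum_(t < T | cond i t) N%:R * ga R N t.+1.
  have di : is_distr (q i) by apply: Hq; exact: ltn_ord.
  apply: le_trans (_ : \sum_(t < T | cond i t) (Pt t (q i) - Pt t.+1 (q i) + N%:R * ga R N t.+1) <= _).
    apply: ler_sum => t ct.
    have qp : 0 < q i (xk N x0 T xs t) by have := Hpos i t ct; rewrite (tnth_nth x0).
    have := @Pot_step R N N2 x0 p Hp Hplb T T1 xs t (q i) (ltn_ord t) di qp.
    by rewrite /f opprK addrC.
  rewrite big_split /= lerD2r.
  have i1 := bge1 i (ltnW (ltn_ord i)).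
  have i2 := ble i.+1 (ltn_ord i).
  have i3 : (nth 0 b i <= nth 0 b i.+1)%N.
    by apply: (@bmono b n.+1 i i.+1 sb so); rewrite leqnSn ltn_ord.
  rewrite (eq_bigl (fun t : 'I_T => ((nth 0 b i).-1 <= t < (nth 0 b i.+1).-1)%N)).
    by rewrite (range_tele (fun k => Pt k (q i))) //; apply/andP; split; lia.
  by move=> t; rewrite /cond; apply/andP/andP; case=> h1 h2; split; lia.
pose G (j i : nat) := Pt (nth 0 b j).-1 (q i).
have hsum : \sum_(i < n.+1) \sum_(t < T | cond i t) f t -
    \sum_(i < n.+1) \sum_(t < T | cond i t) - ln (q i (xk N x0 T xs t)) <=
    \sum_(i < n.+1) (G i i - G i.+1 i) + \sum_(t < T) N%:R * ga R N t.+1.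
  rewrite -sumrB (@partition R (fun t => N%:R * ga R N t.+1) T n.+1 b sb so b0 bn) -big_split /=.
  by apply: ler_sum => i _; rewrite -sumrB; apply: seg.
rewrite seg_tele in hsum.
have dq i : (i < n.+1)%N -> is_distr (q i) by apply: Hq.
have hG0 : G 0%N 0%N <= LL R N T * KK R N T + N%:R * ln (2 * N%:R).
  by rewrite /G b0; apply: Pot0_le => //; apply: dq.
have hGn : - ln (T.+1%:R : R) <= G n.+1 n by rewrite /G bn; apply: PotT_ge => //; apply: dq.
have l0 i : 0 <= l1dist (q i.+1) (q i) by apply: sumr_ge0 => y _.
have hsw : \sum_(i < n) (G i.+1 i.+1 - G i.+1 i) <=
    LL R N T / 2 * KK R N T * \sum_(i < n) l1dist (q i.+1) (q i).
  rewrite mulr_sumr; apply: ler_sum => i _; rewrite /G.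
  apply: Pot_switch => //.
  - by rewrite -subn1 leq_subLR add1n; exact: (ble i.+1 (ltnW (ltn_ord i))).
  - by apply: dq; rewrite ltnS ltnW.
  - by apply: dq; rewrite ltnS.
have hga := @sum_ga R N N2 T.
have hLK := @LK_bound R N N2 T.
rewrite -/S in hga hLK.
have L0 : 0 < LL R N T by apply: lnN_gt0.
have hLS : LL R N T <= S.
  rewrite /S /LL.
  have eL : ln (N%:R * T.+1%:R) = Num.sqrt (ln (N%:R * T.+1%:R : R) ^+ 2).
    by rewrite sqrtr_sqr ger0_norm //; apply: ltW; apply: lnN_gt0.
  rewrite {1}eL ler_sqrt; last by rewrite !mulr_ge0 ?ler0n //; apply: ltW; apply: lnN_gt0.
  rewrite expr2 ler_wpM2r //; first by apply: ltW; apply: lnN_gt0.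
  have hp : (0 : R) < N%:R * T.+1%:R by rewrite mulr_gt0 ?ltr0n //; lia.
  apply: le_trans (ltW (ln_sublinear hp)) _.
  rewrite -mulrA; lra.
have Csum : 0 <= \sum_(i < n) l1dist (q i.+1) (q i) by apply: sumr_ge0.
have hsw2 : LL R N T / 2 * KK R N T * \sum_(i < n) l1dist (q i.+1) (q i) <=
    S * \sum_(i < n) l1dist (q i.+1) (q i).
  apply: ler_wpM2r => //.
  rewrite /KK mulrAC; move: hLK hLS; rewrite /LL /KK; lra.
have s128 := sqrtr_ge0 (128 * N%:R * T%:R / ln (T%:R : R)).
rewrite /PWS_complexity /=.
move: hLK; rewrite -/(LL R N T) -/(KK R N T) => hLK.
lra.
Qed.

Lemma g_bound (R : realType) (N : nat) (N2 : (2 <= N)%N) (T : nat) (T2 : (2 <= T)%N) :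
  ln (N%:R * T.+1%:R) + N%:R * ln (2 * N%:R) + ln (T.+1%:R : R) <=
  (6 + 2 * ln (2 * N%:R)) * N%:R * ln (T%:R : R).
Proof.
have NR := @N_ge2 R N N2.
have TR : (2 : R) <= T%:R by rewrite ler_nat.
have l2 : 1 / 2 <= ln (T%:R : R).
  have := @ln_ge_1V R (T%:R) ltac:(lra).
  have : (T%:R : R)^-1 <= 2^-1 by apply: inv_le; lra.
  lra.
have lN : 0 <= ln (2 * N%:R : R) by apply: ln_ge0; lra.
have lNN : ln (N%:R : R) <= N%:R by apply: ltW; apply: ln_sublinear; lra.
have lT1 : ln (T.+1%:R : R) <= 2 * ln (T%:R : R).
  have e : ln ((T%:R : R) ^+ 2) = 2 * ln (T%:R : R) by rewrite lnXn; [rewrite mulr2n; ring | lra].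
  rewrite -e ler_ln ?posrE ?ltr0n ?exprn_gt0 //; last lra.
  rewrite -natrX ler_nat; nia.
have eln : ln (N%:R * T.+1%:R : R) = ln (N%:R : R) + ln (T.+1%:R : R).
  by rewrite lnMp // ?ltr0n //; lia.
rewrite eln.
set l := ln (T%:R : R) in l2 lT1 *.
set L2 := ln (2 * N%:R : R) in lN *.
have h1 : 0 <= N%:R * (2 * l - 1) by apply: mulr_ge0; lra.
have h2 : 0 <= N%:R * L2 * (2 * l - 1) by apply: mulr_ge0; [apply: mulr_ge0; lra | lra].
have h3 : 0 <= (N%:R - 1) * l by apply: mulr_ge0; lra.
nra.
Qed.

Theorem theorem2 (R : realType) (N : nat) : (2 <= N)%N ->
  exists g : nat -> ('I_N -> R) -> R,
    (exists (c : R) (T0 : nat), forall (T : nat) (p : 'I_N -> R),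
        (T0 <= T)%N -> is_distr p ->
        (forall x, eps_thm R 1 / (N.-1)%:R <= p x) ->
        g T p <= c * N%:R * ln (T%:R : R)) /\
    (forall (T : nat) (p : 'I_N -> R), (2 <= T)%N -> is_distr p ->
      (forall x, eps_thm R 1 / (N.-1)%:R <= p x) ->
      forall (n : nat) (b : seq nat) (q : nat -> 'I_N -> R),
        is_PWS T n b q ->
      forall xs : T.-tuple 'I_N,
        (forall (i : 'I_n) (t : 'I_T),
            (nth 0 b i <= t.+1 < nth 0 b i.+1)%N -> 0 < q i (tnth xs t)) ->
        code_length (PS (alpha_thm R N) (eps_thm R) p) xs <=
          PWS_length n b q xs
          + Num.sqrt (2 * N%:R * (T.+1)%:R * ln (N%:R * (T.+1)%:R))
              * (1 + PWS_complexity n q)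
          + Num.sqrt (128 * N%:R * T%:R / ln (T%:R : R))
          + g T p).
Proof.
move=> N2.
exists (fun T (p : 'I_N -> R) => ln (N%:R * T.+1%:R) + N%:R * ln (2 * N%:R) + ln (T.+1%:R : R)).
split.
  exists (6 + 2 * ln (2 * N%:R : R)), 2%N => T p T2 _ _.
  exact: g_bound.
move=> T p T2 Hp Hplb n b q HP xs Hpos.
exact: main_bound.
Qed.
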